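(* Let $f:V\to W$ be as in the context (with $n+1\ge 4$, $b\neq 0$, $c\neq 0$, and $A$ the companion matrix of the minimal polynomial over $\mathbb{F}_p$ of a primitive element of $\mathrm{GF}(p^n)$). Then the group $$G=\{g\in \mathrm{GL}(V) : (vg)f=(vf)\widehat{g}\ \text{for all } v\in V\}$$ is trivial, i.e. $G=\{1\}$.
   Context: Let $p$ be a prime, $\mathbb{F}=\mathrm{GF}(p)$, and $n\ge 3$. Let $V$ be an $\mathbb{F}$-vector space of dimension $n+1$ with basis $v_0,v_1,\dots,v_n$, and let $U=\langle v_1,\dots,v_n\rangle$. Let $W=\Lambda^2V$ be the exterior square, with ordered basis beginning $v_0\wedge v_1,\dots,v_0\wedge v_n$ and continuing with the $v_i\wedge v_j$, $1\le i<j\le n$ (in a fixed order). Maps are written on the right and vectors are row vectors. For $g\in\mathrm{End}(V)$, $\widehat{g}$ denotes the induced linear map of $W$, $(x\wedge y)\widehat g=(xg)\wedge(yg)$. The linear map $f:V\to W$ has, with respect to these bases, block matrix $\begin{bmatrix} b & c\\ A & 0\end{bmatrix}$, i.e. $v_0f=\sum_{i=1}^n b_i\, v_0\wedge v_i+\sum_{1\le j<k\le n}c_{j,k}\, v_j\wedge v_k$ and $v_if=\sum_{j=1}^n A_{i,j}\, v_0\wedge v_j$ for $1\le i\le n$, where $b\in\mathbb{F}^{n}$ is a nonzero row vector, $c\in\mathbb{F}^{\binom n2}$ is a nonzero row vector, and $A$ is the $n\times n$ companion matrix of the minimal polynomial $m$ over $\mathbb{F}$ of a primitive element $\alpha$ (generator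 of the multiplicative group) of $\mathrm{GF}(p^n)$. *)

(* Defs.v *)
From HB Require Import structures.
From mathcomp Require Import all_boot all_order all_algebra all_field.
Set Implicit Arguments. Unset Strict Implicit. Unset Printing Implicit Defensive.
Import GRing.Theory.
Local Open Scope ring_scope.

(* Strictly increasing pairs (i, j), i < j, of indices in 'I_k: the index set
   of the standard basis v_i /\ v_j of the exterior square of F^k. *)
Notation spair k := {q : 'I_k * 'I_k | (q.1 < q.2)%N}.

(* Lambda^2 of F^k, as coordinate functions on the basis v_i /\ v_j, i<j. *)
Notation ext2 F k := {ffun spair k -> F}.

Definition wedge (F : fieldType) (k : nat) (x y : 'rV[F]_k) : ext2 F k :=
  [ffun q : spair k => x 0 (val q).1 * y 0 (val q).2 - x 0 (val q).2 * y 0 (val q).1].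

Definition escale (F : fieldType) (k : nat) (a : F) (w : ext2 F k) : ext2 F k :=
  [ffun q => a * w q].

Definition bvec (F : fieldType) (k : nat) (i : 'I_k) : 'rV[F]_k := delta_mx 0 i.
Arguments bvec {F k} i.

(* The induced map g^ on Lambda^2 V: (v_i /\ v_j) g^ = (v_i g) /\ (v_j g),
   extended linearly (maps on the right, row i of g is v_i g). *)
Notation "a `*e` w" := (escale a w) (at level 40).

Definition hatmap (F : fieldType) (k : nat) (g : 'M[F]_k) (w : ext2 F k) : ext2 F k :=
  \sum_(q : spair k) w q `*e` wedge (row (val q).1 g) (row (val q).2 g).

(* The map f : V -> W on basis vectors, V = F^(n+1) with basis v_0, ..., v_n,
   where v_0 is index ord0 and v_i (1<=i<=n) is index lift ord0 (i-1). *)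
Definition fbasis (F : fieldType) (n : nat) (b : 'rV[F]_n) (c : {ffun spair n -> F})
  (A : 'M[F]_n) (k : 'I_n.+1) : ext2 F n.+1 :=
  match unlift ord0 k with
  | None =>
      \sum_(i < n) b 0 i `*e` wedge (bvec ord0) (bvec (lift ord0 i))
      + \sum_(q : spair n) c q `*e` wedge (bvec (lift ord0 (val q).1)) (bvec (lift ord0 (val q).2))
  | Some i => \sum_(j < n) A i j `*e` wedge (bvec ord0) (bvec (lift ord0 j))
  end.

Definition fmap (F : fieldType) (n : nat) (b : 'rV[F]_n) (c : {ffun spair n -> F})
  (A : 'M[F]_n) (v : 'rV[F]_n.+1) : ext2 F n.+1 :=
  \sum_(k < n.+1) v 0 k `*e` fbasis b c A k.

(* Main.v *)
Require Import Defs.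
From HB Require Import structures.
From mathcomp Require Import all_boot all_order all_algebra all_field ring zify.

Lemma arith1 X Y Z : (X <= Y)%N -> (Y < Z)%N -> (0 < X)%N -> (Z <= (Y - X).+1)%N -> False.
Proof. lia. Qed.
Lemma arith2 p X Z : (1 < p)%N -> (p <= X)%N -> (X * p <= Z)%N -> (Z <= ((X.-1) * p.-1).+1)%N -> False.
Proof. case: X => [|x]; case: p => [|[|q]] //= _ h1 h2 h3.
have: (x.+1 * q.+2 <= (x * q.+1).+1)%N by apply: leq_trans h3.
rewrite !mulSn !mulnS. lia. Qed.
Set Implicit Arguments. Unset Strict Implicit. Unset Printing Implicit Defensive.
Import GRing.Theory.
Local Open Scope ring_scope.

Section Ext.
Variables (F : fieldType) (k : nat).
Implicit Types (x y : 'rV[F]_k) (w : ext2 F k) (g : 'M[F]_k).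

Lemma escaleE a w q : (a `*e` w) q = a * w q.
Proof. by rewrite ffunE. Qed.
Lemma wedgeE x y q : wedge x y q = x 0 (val q).1 * y 0 (val q).2 - x 0 (val q).2 * y 0 (val q).1.
Proof. by rewrite ffunE. Qed.
Lemma addE w1 w2 q : (w1 + w2) q = w1 q + w2 q.
Proof. by rewrite ffunE. Qed.
Lemma oppE w q : (- w) q = - w q.
Proof. by rewrite ffunE. Qed.
Lemma zeroE q : (0 : ext2 F k) q = 0.
Proof. by rewrite ffunE. Qed.

Lemma hatmapE g w r : hatmap g w r = \sum_q w q * wedge (row (val q).1 g) (row (val q).2 g) r.
Proof. by rewrite /hatmap sum_ffunE; apply: eq_bigr => q _; rewrite ffunE. Qed.

Lemma hatmap_sum I (s : seq I) (P : pred I) (W : I -> ext2 F k) g :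
  hatmap g (\sum_(i <- s | P i) W i) = \sum_(i <- s | P i) hatmap g (W i).
Proof.
apply/ffunP => r; rewrite hatmapE sum_ffunE.
under eq_bigr do rewrite sum_ffunE mulr_suml.
rewrite exchange_big /=; apply: eq_bigr => i _; by rewrite hatmapE.
Qed.

Lemma hatmap_scale g a w : hatmap g (a `*e` w) = a `*e` hatmap g w.
Proof.
apply/ffunP => r; rewrite escaleE !hatmapE mulr_sumr; apply: eq_bigr => q _.
by rewrite escaleE mulrA.
Qed.

Lemma hatmapN g w : hatmap g (- w) = - hatmap g w.
Proof.
apply/ffunP => r; rewrite oppE !hatmapE -sumrN; apply: eq_bigr => q _.
by rewrite oppE mulNr.
Qed.

Lemma wedge_anti x y : wedge y x = - wedge x y.
Proof. apply/ffunP => q; rewrite oppE !wedgeE /= ?mulr1n ?mulr0n; ring. Qed.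

Lemma wedge_xx x : wedge x x = 0.
Proof. apply/ffunP => q; rewrite zeroE !wedgeE /= ?mulr1n ?mulr0n; ring. Qed.

Lemma hatmap0 g : hatmap g 0 = 0.
Proof. apply/ffunP => r; rewrite hatmapE zeroE big1 // => q _; by rewrite zeroE mul0r. Qed.

Lemma bvecE (i j : 'I_k) : (bvec i : 'rV[F]_k) 0 j = (j == i)%:R.
Proof. by rewrite /bvec mxE eqxx. Qed.

Lemma hatmap_bvec_lt g (i j : 'I_k) (h : (i < j)%N) :
  hatmap g (wedge (bvec i) (bvec j)) = wedge (row i g) (row j g).
Proof.
apply/ffunP => r; rewrite hatmapE.
pose q0 : spair k := exist _ (i, j) h.
rewrite (bigD1 q0) //= big1 ?addr0.
  have ne : (i == j) = false by apply/negbTE; rewrite neq_ltn h.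
  by rewrite wedgeE /= !bvecE !eqxx ne eq_sym ne /= /= ?mulr1n ?mulr0n; ring.
move=> [[a b] hab] /= hq; rewrite wedgeE /= !bvecE.
have H1 : ~~ ((a == i) && (b == j)).
  apply: contra hq => /andP[/eqP ea /eqP eb].
  by apply/eqP; apply: val_inj; rewrite /= ea eb.
have H2 : ~~ ((b == i) && (a == j)).
  apply/negP => /andP[/eqP eb /eqP ea]; have := hab; rewrite /= ea eb.
  by rewrite ltnNge (ltnW h).
move: H1 H2; case: (a == i); case: (b == j); case: (b == i); case: (a == j) => //= _ _; ring.
Qed.
Lemma hatmap_bvec g (i j : 'I_k) :
  hatmap g (wedge (bvec i) (bvec j)) = wedge (row i g) (row j g).
Proof.
case: (ltngtP i j) => [h|h|/val_inj ->]; first exact: hatmap_bvec_lt.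
  by rewrite wedge_anti hatmapN hatmap_bvec_lt // -wedge_anti.
by rewrite !wedge_xx hatmap0.
Qed.
End Ext.

Lemma hatmapD (F : fieldType) k (g : 'M[F]_k) w1 w2 :
  hatmap g (w1 + w2) = hatmap g w1 + hatmap g w2.
Proof.
apply/ffunP => r; rewrite addE !hatmapE -big_split; apply: eq_bigr => q _.
by rewrite addE mulrDl.
Qed.

Section FB.
Variables (F : fieldType) (n : nat) (b : 'rV[F]_n) (c : {ffun spair n -> F}) (A : 'M[F]_n).
Local Notation l0 := (lift ord0).

Lemma bvec00 : (bvec ord0 : 'rV[F]_n.+1) 0 ord0 = 1.
Proof. by rewrite bvecE eqxx. Qed.
Lemma bvec0l (a : 'I_n) : (bvec ord0 : 'rV[F]_n.+1) 0 (l0 a) = 0.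
Proof. by rewrite bvecE eq_sym (negbTE (neq_lift _ _)). Qed.
Lemma bvecl0 (a : 'I_n) : (bvec (l0 a) : 'rV[F]_n.+1) 0 ord0 = 0.
Proof. by rewrite bvecE (negbTE (neq_lift _ _)). Qed.
Lemma bvecll (a i : 'I_n) : (bvec (l0 i) : 'rV[F]_n.+1) 0 (l0 a) = (a == i)%:R.
Proof. by rewrite bvecE (inj_eq (@lift_inj _ ord0)). Qed.

Lemma ltSpU (a b' : 'I_n) : (a < b')%N -> (l0 a < l0 b')%N.
Proof. by rewrite !lift0. Qed.
Lemma ltSp0 (t : 'I_n) : ((ord0 : 'I_n.+1) < l0 t)%N.
Proof. by rewrite lift0. Qed.
Definition SpU (a b' : 'I_n) (h : (a < b')%N) : spair n.+1 :=
  exist (fun q : 'I_n.+1 * 'I_n.+1 => (q.1 < q.2)%N) (l0 a, l0 b') (ltSpU h).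
Definition Sp0 (t : 'I_n) : spair n.+1 :=
  exist (fun q : 'I_n.+1 * 'I_n.+1 => (q.1 < q.2)%N) (ord0, l0 t) (ltSp0 t).
Definition Sp (a b : 'I_n) (h : (a < b)%N) : spair n :=
  exist (fun q : 'I_n * 'I_n => (q.1 < q.2)%N) (a, b) h.

Lemma fmapE v r : fmap b c A v r = \sum_k v 0 k * fbasis b c A k r.
Proof. by rewrite /fmap sum_ffunE; apply: eq_bigr => k _; rewrite escaleE. Qed.

Lemma hat_fmap g v r :
  hatmap g (fmap b c A v) r = \sum_k v 0 k * hatmap g (fbasis b c A k) r.
Proof.
by rewrite /fmap hatmap_sum sum_ffunE; apply: eq_bigr => k _; rewrite hatmap_scale escaleE.
Qed.

Lemma hat_fb0 g r : hatmap g (fbasis b c A ord0) r =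
  \sum_i b 0 i * wedge (row ord0 g) (row (l0 i) g) r +
  \sum_q c q * wedge (row (l0 (val q).1) g) (row (l0 (val q).2) g) r.
Proof.
rewrite /fbasis unlift_none hatmapD addE !hatmap_sum !sum_ffunE.
by congr (_ + _); apply: eq_bigr => q _; rewrite hatmap_scale escaleE hatmap_bvec.
Qed.

Lemma hat_fbi g i r : hatmap g (fbasis b c A (l0 i)) r =
  \sum_j A i j * wedge (row ord0 g) (row (l0 j) g) r.
Proof.
rewrite /fbasis liftK hatmap_sum sum_ffunE.
by apply: eq_bigr => q _; rewrite hatmap_scale escaleE hatmap_bvec.
Qed.

Lemma fb0_U (a b' : 'I_n) (h : (a < b')%N) : fbasis b c A ord0 (SpU h) = c (Sp h).
Proof.
rewrite /fbasis unlift_none addE !sum_ffunE big1 ?add0r; last first.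
  by move=> i _; rewrite escaleE wedgeE /= !bvec0l /= ?mulr1n ?mulr0n; ring.
rewrite (bigD1 (Sp h)) //= big1 ?addr0.
  have ne : (a == b') = false by apply/negbTE; rewrite neq_ltn h.
  by rewrite escaleE wedgeE /= !bvecll !eqxx ne eq_sym ne /= ?mulr1n ?mulr0n /= ?mulr1n ?mulr0n; ring.
move=> [[x y] hxy] /= hq; rewrite escaleE wedgeE /= !bvecll.
have H1 : ~~ ((a == x) && (b' == y)).
  apply: contra hq => /andP[/eqP ea /eqP eb].
  by apply/eqP; apply: val_inj; rewrite /= ea eb.
have H2 : ~~ ((a == y) && (b' == x)).
  apply/negP => /andP[/eqP eb /eqP ea]; have := hxy; rewrite /= -ea -eb.
  by rewrite ltnNge (ltnW h).
move: H1 H2; case: (a == x); case: (b' == y); case: (a == y); case: (b' == x) => //= _ _; ring.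
Qed.

Lemma fb0_0 t : fbasis b c A ord0 (Sp0 t) = b 0 t.
Proof.
rewrite /fbasis unlift_none addE !sum_ffunE [X in _ + X]big1 ?addr0; last first.
  by move=> q _; rewrite escaleE wedgeE /= !bvecl0 /= ?mulr1n ?mulr0n; ring.
rewrite (bigD1 t) //= big1 ?addr0.
  by rewrite escaleE wedgeE /= bvec00 bvecll eqxx bvecl0 /= ?mulr1n ?mulr0n; ring.
move=> i hi; rewrite escaleE wedgeE /= bvec00 bvecll bvecl0 eq_sym (negbTE hi) /= ?mulr1n ?mulr0n; ring.
Qed.

Lemma fbi_U i (a b' : 'I_n) (h : (a < b')%N) : fbasis b c A (l0 i) (SpU h) = 0.
Proof.
rewrite /fbasis liftK sum_ffunE big1 // => j _.
by rewrite escaleE wedgeE /= !bvec0l /= ?mulr1n ?mulr0n; ring.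
Qed.

Lemma fbi_0 i t : fbasis b c A (l0 i) (Sp0 t) = A i t.
Proof.
rewrite /fbasis liftK sum_ffunE (bigD1 t) //= big1 ?addr0.
  by rewrite escaleE wedgeE /= bvec00 bvecll eqxx bvecl0 /= ?mulr1n ?mulr0n; ring.
move=> j hj; rewrite escaleE wedgeE /= bvec00 bvecll bvecl0 eq_sym (negbTE hj) /= ?mulr1n ?mulr0n; ring.
Qed.

End FB.

Section Eqs.
Variables (F : fieldType) (n : nat) (b : 'rV[F]_n) (c : {ffun spair n -> F}) (A : 'M[F]_n).
Variable (g : 'M[F]_n.+1).
Hypothesis H : forall v : 'rV[F]_n.+1, fmap b c A (v *m g) = hatmap g (fmap b c A v).
Local Notation l0 := (lift ord0).

Lemma EqU (v : 'rV[F]_n.+1) (a b' : 'I_n) (h : (a < b')%N) :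
  (v *m g) 0 ord0 * c (Sp h) = v 0 ord0 * hatmap g (fbasis b c A ord0) (SpU h) +
  \sum_i v 0 (l0 i) * \sum_j A i j *
     (g ord0 (l0 a) * g (l0 j) (l0 b') - g ord0 (l0 b') * g (l0 j) (l0 a)).
Proof.
have := congr1 (fun w : ext2 F n.+1 => w (SpU h)) (H v) => /=.
rewrite fmapE hat_fmap !big_ord_recl fb0_U big1 ?addr0; last by move=> i _; rewrite fbi_U mulr0.
move=> ->; congr (_ + _); apply: eq_bigr => i _; rewrite hat_fbi; congr (_ * _).
by apply: eq_bigr => j _; rewrite wedgeE /= !mxE.
Qed.

Lemma Eq0 (v : 'rV[F]_n.+1) (t : 'I_n) :
  (v *m g) 0 ord0 * b 0 t + \sum_i (v *m g) 0 (l0 i) * A i t =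
  v 0 ord0 * hatmap g (fbasis b c A ord0) (Sp0 t) +
  \sum_i v 0 (l0 i) * \sum_j A i j *
     (g ord0 ord0 * g (l0 j) (l0 t) - g ord0 (l0 t) * g (l0 j) ord0).
Proof.
have := congr1 (fun w : ext2 F n.+1 => w (Sp0 t)) (H v) => /=.
rewrite fmapE hat_fmap !big_ord_recl fb0_0.
rewrite (eq_bigr (fun i : 'I_n => (v *m g) 0 (l0 i) * A i t)); last first.
  by move=> i _; rewrite fbi_0.
move=> ->; congr (_ + _); apply: eq_bigr => i _; rewrite hat_fbi; congr (_ * _).
by apply: eq_bigr => j _; rewrite wedgeE /= !mxE.
Qed.

Lemma hat00 t : hatmap g (fbasis b c A ord0) (Sp0 t) =
  \sum_i b 0 i * (g ord0 ord0 * g (l0 i) (l0 t) - g ord0 (l0 t) * g (l0 i) ord0) +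
  \sum_q c q * (g (l0 (val q).1) ord0 * g (l0 (val q).2) (l0 t) -
                g (l0 (val q).1) (l0 t) * g (l0 (val q).2) ord0).
Proof.
rewrite hat_fb0; congr (_ + _); apply: eq_bigr => i _; by rewrite wedgeE /= !mxE.
Qed.
End Eqs.

Lemma three_pts n (s : 'I_n) : (2 < n)%N ->
  exists t1 t2 : 'I_n, [/\ t1 != s, t2 != s & t1 != t2].
Proof.
move=> hn.
have h0 : (0 < n)%N by apply: leq_trans hn.
have h1 : (1 < n)%N by apply: leq_trans hn.
have p1 : ((if val s == 0%N then 1 else 0) < n)%N by case: ifP.
have p2 : ((if val s == 2%N then 1 else 2) < n)%N by case: ifP.
exists (Ordinal p1), (Ordinal p2).
split; apply/eqP => /(congr1 val) /=; clear p1 p2; case: s => [s hs] /=;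
  by case: s hs => [|[|[|s]]] hs.
Qed.

Section XU.
Variables (F : fieldType) (n : nat) (x : 'rV[F]_n.+1) (c : {ffun spair n -> F}).
Local Notation l0 := (lift ord0).

Definition cc (a b : 'I_n) : F :=
  odflt 0 (omap c (insub (a, b))) - odflt 0 (omap c (insub (b, a))).

Lemma cc_lt (a b : 'I_n) (h : (a < b)%N) : cc a b = c (Sp h).
Proof.
rewrite /cc (insubT (fun q : 'I_n * 'I_n => (q.1 < q.2)%N) (x := (a, b)) h) insubF /=.
  by rewrite subr0; congr (c _); apply: val_inj.
by rewrite ltnNge ltnW.
Qed.

Lemma cc_sym a b : cc b a = - cc a b.
Proof. by rewrite /cc opprB. Qed.

Lemma cc_eq a : cc a a = 0.
Proof. by rewrite /cc subrr. Qed.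

Lemma xU0 : (2 < n)%N ->
  (forall t : 'I_n, exists mu, forall (a b : 'I_n) (h : (a < b)%N),
     x 0 (l0 a) * (b == t)%:R - x 0 (l0 b) * (a == t)%:R = mu * c (Sp h)) ->
  forall s, x 0 (l0 s) = 0.
Proof.
move=> hn H s.
have G : forall t, exists mu, forall a b,
    x 0 (l0 a) * (b == t)%:R - x 0 (l0 b) * (a == t)%:R = mu * cc a b.
  move=> t; have [mu hmu] := H t; exists mu => a b.
  case: (ltngtP a b) => [h|h|/val_inj ->].
  - by rewrite cc_lt hmu.
  - by rewrite cc_sym cc_lt mulrN -hmu opprB.
  - by rewrite cc_eq subrr mulr0.
have [t1 [t2 [n1 n2 n12]]] := three_pts s hn.
have [mu1 G1] := G t1; have [mu2 G2] := G t2.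
apply/eqP; apply: contraT => xs.
have s1 : (s == t1) = false by rewrite eq_sym (negbTE n1).
have s2 : (s == t2) = false by rewrite eq_sym (negbTE n2).
have s21 : (t2 == t1) = false by rewrite eq_sym (negbTE n12).
have e1 := G1 s t1; rewrite eqxx s1 mulr1 mulr0 subr0 in e1.
have e2 := G1 s t2; rewrite s1 s21 !mulr0 subrr in e2.
have e3 := G2 s t2; rewrite eqxx s2 mulr1 mulr0 subr0 in e3.
have mu1n : mu1 != 0 by apply: contraNneq xs => m0; rewrite e1 m0 mul0r.
move/esym/eqP: e2; rewrite mulf_eq0 (negbTE mu1n) /= => /eqP c0.
by move/eqP: xs; rewrite e3 c0 mulr0.
Qed.
End XU.

Section Fld.
Variables (p : nat) (hp : prime p) (L : fieldExtType 'F_p) (alpha : L).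
Hypothesis halpha : forall x : L, x != 0 -> exists k : nat, x = alpha ^+ k.

Lemma ord_bound e : (0 < e)%N -> alpha ^+ e = 1 -> (p ^ \dim {:L} <= e.+1)%N.
Proof.
move=> e0 he.
pose P : {poly L} := 'X^(e.+1) - 'X.
have sP : size P = e.+2.
  by rewrite /P size_polyDl ?size_polyXn // size_polyN size_polyX ltnS.
have P0 : P != 0 by rewrite -size_poly_gt0 sP.
pose rs := map (passmx.vecof (vbasis (fullv : {vspace L}))) (enum 'rV['F_p]_(\dim {:L})).
have := max_poly_roots P0 _ _ (rs := rs).
rewrite sP size_map -cardT card_mx card_Fp // mul1n ltnS; apply.
  apply/allP => x _; rewrite /root /P !hornerE.
  have [->|nx] := eqVneq x 0; first by rewrite expr0n subrr.
  have [j ->] := halpha nx.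
  by rewrite -exprM mulnSr exprD mulnC exprM he expr1n mul1r subrr.
rewrite map_inj_uniq ?enum_uniq //; exact: can_inj (passmx.vecofK (vbasisP _)).
Qed.

Variables (m : {poly 'F_p}) (hm : map_poly (in_alg L) m = minPoly 1%AS alpha).
Hypothesis ha0 : alpha != 0.

Lemma pL : p \in [pchar L].
Proof. exact: (rmorph_pchar (in_alg L) (pchar_Fp hp)). Qed.

Lemma Fp_fix (a : 'F_p) : a ^+ p = a.
Proof. by have := expf_card a; rewrite card_Fp. Qed.

Lemma frob_root x : root (map_poly (in_alg L) m) x -> root (map_poly (in_alg L) m) (x ^+ p).
Proof.
have E : map_poly (pFrobenius_aut pL) (map_poly (in_alg L) m) = map_poly (in_alg L) m.
  rewrite -map_poly_comp; apply: eq_map_poly => a /=.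
  by rewrite pFrobenius_autE -[a%:A]/(in_alg L a) -rmorphXn Fp_fix.
move=> /rootP r; apply/rootP; rewrite -(pFrobenius_autE pL) -{1}E horner_map r.
exact: rmorph0.
Qed.

Lemma root_pow k : root (map_poly (in_alg L) m) (alpha ^+ (p ^ k)).
Proof.
elim: k => [|k IH]; first by rewrite expn0 expr1 hm root_minPoly.
by rewrite expnS mulnC exprM; apply: frob_root.
Qed.

Lemma p_gt1 : (1 < p)%N. Proof. exact: prime_gt1. Qed.

Lemma pow_neq j k : (j < k < \dim {:L})%N -> alpha ^+ (p ^ j) != alpha ^+ (p ^ k).
Proof.
move=> /andP[jk kD]; apply/eqP => E.
have p1 := p_gt1.
have le : (p ^ j <= p ^ k)%N by rewrite leq_pexp2l ?(ltnW jk) // ltnW.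
have e1 : alpha ^+ (p ^ k - p ^ j) = 1.
  apply: (mulfI (expf_neq0 (p ^ j) ha0)).
  by rewrite -exprD subnKC // mulr1 E.
have pos : (0 < p ^ k - p ^ j)%N by rewrite subn_gt0 ltn_exp2l.
have := ord_bound pos e1.
have : (0 < p ^ j)%N by rewrite expn_gt0 ltnW.
have : (p ^ k < p ^ \dim {:L})%N by rewrite ltn_exp2l.
move=> h1 h2 h3; exact: (arith1 _ _ _ le h1 h2 h3).
Qed.

Lemma lam_one (lam : 'F_p) : lam != 0 -> root (map_poly (in_alg L) m) (in_alg L lam * alpha) ->
  size m = (\dim {:L}).+1 -> lam = 1.
Proof.
move=> l0 hr sm.
pose rs := [seq alpha ^+ (p ^ k) | k <- iota 0 (\dim {:L})].
have urs : uniq rs.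
  rewrite map_inj_in_uniq ?iota_uniq // => j k; rewrite !mem_iota /= !add0n => jD kD E.
  apply/eqP; apply: contraLR isT => jk.
  case: (ltngtP j k) => [h|h|/eqP]; last by rewrite (negbTE jk).
    by move: (pow_neq (j:=j) (k:=k)); rewrite h kD E eqxx => /(_ isT).
  by move: (pow_neq (j:=k) (k:=j)); rewrite h jD E eqxx => /(_ isT).
have m0 : map_poly (in_alg L) m != 0 by rewrite map_poly_eq0 -size_poly_gt0 sm.
have : in_alg L lam * alpha \in rs.
  apply: contraT => nin.
  have := max_poly_roots m0 (rs := in_alg L lam * alpha :: rs).
  rewrite size_map_poly sm /= size_map size_iota ltnn hr nin urs /=; apply => //.
  by apply/allP => x /mapP[k _ ->]; exact: root_pow.
case/mapP => k; rewrite mem_iota add0n /= => kD E.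
case: k kD E => [|k] kD E.
  move: E; rewrite expn0 expr1 -{2}(mul1r alpha) => /(mulIf ha0) /eqP.
  by rewrite -[lam%:A]/(in_alg L lam) fmorph_eq1 => /eqP.
exfalso.
have p1 := p_gt1.
have e1 : alpha ^+ (p ^ k.+1).-1 = in_alg L lam.
  apply: (mulIf ha0); rewrite -exprSr prednK ?expn_gt0 ?(ltnW p1) //.
have lp : lam ^+ p.-1 = 1.
  apply: (mulIf l0); rewrite -exprSr prednK ?(ltnW p1) // Fp_fix mul1r //.
have e2 : alpha ^+ ((p ^ k.+1).-1 * p.-1) = 1 by rewrite exprM e1 -rmorphXn lp rmorph1.
have pos : (0 < (p ^ k.+1).-1 * p.-1)%N.
  rewrite muln_gt0 -!subn1 !subn_gt0 p1 andbT.
  by rewrite -{1}(expn0 p) ltn_exp2l.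
have := ord_bound pos e2.
have : (p ^ k.+1 * p <= p ^ \dim {:L})%N by rewrite -expnSr leq_pexp2l ?(ltnW p1).
have : (p <= p ^ k.+1)%N by rewrite -{1}(expn1 p) leq_pexp2l ?(ltnW p1).
move=> h1 h2 h3; exact: (arith2 _ _ _ p1 h1 h2 h3).
Qed.
End Fld.

Section Mx.
Variables (p : nat) (hp : prime p) (L : fieldExtType 'F_p) (alpha : L).
Hypothesis halpha : forall x : L, x != 0 -> exists k : nat, x = alpha ^+ k.
Variables (m : {poly 'F_p}) (hm : map_poly (in_alg L) m = minPoly 1%AS alpha).
Variables (n' : nat) (A : 'M['F_p]_n'.+1) (hA : horner_mx A m = 0).

Definition ev (q : {poly 'F_p}) := (map_poly (in_alg L) q).[alpha].

Lemma ev_dvd q : ev q = 0 -> m %| q.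
Proof.
move=> e; rewrite -(dvdp_map (in_alg L)) hm; apply: minPoly_dvdp.
  by apply/polyOver1P; exists q.
exact/rootP.
Qed.

Lemma ev_unit q : ev q != 0 -> horner_mx A q \in unitmx.
Proof.
move=> nz; have [j hj] := halpha (invr_neq0 nz).
have : m %| q * 'X^j - 1.
  apply: ev_dvd; rewrite /ev rmorphB rmorphM /= map_polyXn rmorph1 !hornerE -hj.
  by rewrite mulfV // subrr.
case/dvdpP => t ht.
have : horner_mx A (q * 'X^j - 1) = 0 by rewrite ht rmorphM /= hA mulr0.
rewrite rmorphB rmorphM rmorph1 /= rmorphXn /= horner_mx_X => /eqP.
rewrite subr_eq0 => /eqP h1.
by case: (mulmx1_unit h1).
Qed.

Lemma ev_root q : horner_mx A q = 0 -> ev q = 0.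
Proof.
move=> h; apply/eqP; apply: contraT => nz; have := ev_unit nz.
by rewrite h unitmxE det0 unitr0.
Qed.

Lemma hBq (B : 'M['F_p]_n'.+1) lam : B * A = lam *: (A * B) ->
  forall q, B * horner_mx A q = horner_mx (lam *: A) q * B.
Proof.
move=> hBA; elim/poly_ind => [|q cc IH]; first by rewrite !rmorph0 mulr0 mul0r.
rewrite !rmorphD !rmorphM /= !horner_mx_X !horner_mx_C mulrDr mulrDl mulrA IH.
rewrite -!mulrA hBA scalerAl; congr (_ + _); exact: scalar_mxC.
Qed.

Lemma horner_comp_lam lam q :
  horner_mx A (q \Po (lam *: 'X)) = horner_mx (lam *: A) q.
Proof.
elim/poly_ind: q => [|q cc IH]; first by rewrite comp_poly0 !rmorph0.
rewrite comp_polyD comp_polyM comp_polyX comp_polyC !rmorphD !rmorphM /= IH.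
rewrite !horner_mx_C horner_mx_X -mul_polyC rmorphM /= horner_mx_C horner_mx_X.
by congr (_ * _ + _); exact: mul_scalar_mx.
Qed.

Lemma lam_root (B : 'M['F_p]_n'.+1) lam : B \in unitmx -> B * A = lam *: (A * B) ->
  root (map_poly (in_alg L) m) (in_alg L lam * alpha).
Proof.
move=> hB hBA.
have h0 : horner_mx (lam *: A) m = 0.
  have := hBq hBA m; rewrite hA mulr0 => /esym E.
  by have := congr1 (fun X => X * B^-1) E; rewrite /= mulrK // mul0r.
have := ev_root (etrans (horner_comp_lam lam m) h0).
rewrite /ev map_comp_poly horner_comp map_polyZ map_polyX hornerZ hornerX => e.
by apply/rootP; exact: e.
Qed.

Lemma B_one (B : 'M['F_p]_n'.+1) (b : 'rV['F_p]_n'.+1) : size m = n'.+2 ->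
  B * A = A * B -> b *m B = b -> b != 0 -> B = 1.
Proof.
move=> sm hc hb bn.
pose M : 'M['F_p]_n'.+1 := \matrix_(k < n'.+1) (b *m A ^+ k).
have Mu : M \in unitmx.
  rewrite unitmxE unitfE; apply/negP => /det0P [z nz hz].
  pose q := \poly_(k < n'.+1) z 0 (inord k).
  have hq : b *m horner_mx A q = 0.
    rewrite -hz (mulmx_sum_row z) /q poly_def rmorph_sum mulmx_sumr; apply: eq_bigr => k _.
    rewrite rowK -mul_polyC rmorphM /= horner_mx_C rmorphXn /= horner_mx_X inord_val -mulmxE.
    by rewrite mul_scalar_mx scalemxAr.
  have nu : ~~ (horner_mx A q \in unitmx).
    apply/negP => u; move/eqP: bn; apply.
    have := congr1 (mulmx^~ (invmx (horner_mx A q))) hq.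
    by rewrite /= -mulmxA mulmxV // mulmx1 mul0mx.
  have e0 : ev q = 0 by apply/eqP; apply: contraNT nu => /ev_unit.
  have dq := ev_dvd e0.
  have q0 : q != 0.
    apply: contra nz => /eqP q0; apply/eqP/rowP => k; rewrite mxE.
    by have := coef_poly n'.+1 (fun k => z 0 (inord k)) k; rewrite -/q q0 coef0 ltn_ord inord_val => <-.
  have h1 := dvdp_leq q0 dq; rewrite sm in h1.
  have h2 := size_poly n'.+1 (fun k => z 0 (inord k)).
  by have := leq_trans h1 h2; rewrite ltnn.
have : M *m (B - 1) = 0.
  apply/row_matrixP => k; rewrite row_mul rowK row0 mulmxBr mulmx1 -mulmxA.
  have -> : A ^+ k *m B = B *m A ^+ k by exact: (esym (commrX k hc)).
  by rewrite mulmxA hb subrr.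
move/(congr1 (mulmx (invmx M))); rewrite mulKmx // mulmx0 => /eqP.
by rewrite subr_eq0 => /eqP.
Qed.
End Mx.

Lemma sum_ind (F : fieldType) k (i0 : 'I_k) (f : 'I_k -> F) :
  \sum_i (i == i0)%:R * f i = f i0.
Proof.
rewrite (bigD1 i0) //= big1 ?addr0 ?eqxx ?mul1r // => i /negbTE ->; by rewrite mul0r.
Qed.

Lemma bvec_mul (F : fieldType) k (i j : 'I_k) (g : 'M[F]_k) : (bvec i *m g) 0 j = g i j.
Proof. by rewrite /bvec -rowE mxE. Qed.

Lemma sum_bvec (F : fieldType) k (i : 'I_k) (f : 'I_k -> F) :
  \sum_i0 (bvec (lift ord0 i) : 'rV[F]_k.+1) 0 (lift ord0 i0) * f i0 = f i.
Proof. by under eq_bigr do rewrite bvecll; rewrite sum_ind. Qed.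

Section Main.
Variables (F : fieldType) (n : nat) (b : 'rV[F]_n) (c : {ffun spair n -> F}) (A : 'M[F]_n).
Variable (g : 'M[F]_n.+1).
Hypothesis H : forall v : 'rV[F]_n.+1, fmap b c A (v *m g) = hatmap g (fmap b c A v).
Local Notation l0 := (lift ord0).

Lemma C1 (hg : g \in unitmx) (hAu : A \in unitmx) (y : 'rV[F]_n.+1) :
  exists mu, forall (a b' : 'I_n) (h : (a < b')%N),
    g ord0 (l0 a) * y 0 (l0 b') - g ord0 (l0 b') * y 0 (l0 a) = mu * c (Sp h).
Proof.
pose w := y *m invmx g.
have hy : y = w *m g by rewrite mulmxKV.
pose u := (\row_j w 0 (l0 j)) *m invmx A.
have hu : forall j, (u *m A) 0 j = w 0 (l0 j) by move=> j; rewrite mulmxKV // mxE.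
pose v : 'rV[F]_n.+1 := \row_k oapp (fun i => u 0 i) 0 (unlift ord0 k).
exists ((v *m g) 0 ord0) => a b' h.
rewrite (EqU H v h) mxE unlift_none /= mul0r add0r.
under eq_bigr do rewrite mxE liftK /=.
have -> : forall D : 'I_n -> F, \sum_i u 0 i * \sum_j A i j * D j = \sum_j (u *m A) 0 j * D j.
  move=> D; under eq_bigr do rewrite mulr_sumr.
  rewrite exchange_big; apply: eq_bigr => j _; rewrite mxE mulr_suml.
  by apply: eq_bigr => i _; rewrite mulrA.
under eq_bigr do rewrite hu.
have S : forall k, \sum_j w 0 (l0 j) * g (l0 j) k = y 0 k - w 0 ord0 * g ord0 k.
  by move=> k; rewrite hy mxE big_ord_recl; ring.
have -> : forall X Y (k1 k2 : 'I_n.+1), \sum_j w 0 (l0 j) * (X * g (l0 j) k1 - Y * g (l0 j) k2) =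
    X * \sum_j w 0 (l0 j) * g (l0 j) k1 - Y * \sum_j w 0 (l0 j) * g (l0 j) k2.
  move=> X Y k1 k2; rewrite !mulr_sumr -sumrB; apply: eq_bigr => j _; ring.
rewrite !S; ring.
Qed.

Lemma C3 (hx : forall s, g ord0 (l0 s) = 0) (hc : c != 0) i : g (l0 i) ord0 = 0.
Proof.
have [q cq] : exists q, c q != 0.
  apply/existsP; apply: contraR hc => /existsPn hq; apply/eqP/ffunP => q.
  by rewrite zeroE; apply/eqP/negPn/hq.
case: q cq => [[a b'] h] cq.
have := EqU H (bvec (l0 i)) h; rewrite bvec_mul bvecl0 mul0r add0r.
rewrite big1 => [/eqP|j _]; last first.
  by rewrite big1 ?mulr0 // => k _; rewrite !hx; ring.
rewrite mulf_eq0 => /orP[/eqP //|]; move: cq.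
have -> : Sp h = exist _ (a, b') h by [].
by move=> /negbTE ->.
Qed.

Definition Bm : 'M[F]_n := \matrix_(i, j) g (l0 i) (l0 j).

Lemma C4 (hx : forall s, g ord0 (l0 s) = 0) (hy : forall s, g (l0 s) ord0 = 0) :
  Bm *m A = g ord0 ord0 *: (A *m Bm).
Proof.
apply/matrixP => i t.
have := Eq0 H (bvec (l0 i)) t; rewrite !bvec_mul bvecl0 hy !mul0r !add0r.
rewrite sum_bvec => E.
rewrite !mxE (eq_bigr (fun k => (bvec (l0 i) *m g) 0 (l0 k) * A k t)); last first.
  by move=> k _; rewrite bvec_mul mxE.
rewrite E mulr_sumr; apply: eq_bigr => j _; rewrite hx hy !mxE; ring.
Qed.

Lemma C5 (hx : forall s, g ord0 (l0 s) = 0) (hy : forall s, g (l0 s) ord0 = 0) :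
  g ord0 ord0 != 0 -> b *m Bm = b.
Proof.
move=> l0n; apply/rowP => t.
have := Eq0 H (bvec ord0) t; rewrite !bvec_mul bvec00 mul1r.
have e1 : \sum_i (bvec ord0 *m g) 0 (l0 i) * A i t = 0.
  by rewrite big1 // => i _; rewrite bvec_mul hx mul0r.
have e2 : \sum_i (bvec ord0 : 'rV[F]_n.+1) 0 (l0 i) *
     \sum_j A i j * (g ord0 ord0 * g (l0 j) (l0 t) - g ord0 (l0 t) * g (l0 j) ord0) = 0.
  by rewrite big1 // => i _; rewrite bvec0l mul0r.
have e3 : \sum_(q : spair n) c q * (g (l0 (val q).1) ord0 * g (l0 (val q).2) (l0 t) -
                g (l0 (val q).1) (l0 t) * g (l0 (val q).2) ord0) = 0.
  by rewrite big1 // => q _; rewrite !hy; ring.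
rewrite e1 e2 hat00 e3 !addr0.
have -> : \sum_i b 0 i * (g ord0 ord0 * g (l0 i) (l0 t) - g ord0 (l0 t) * g (l0 i) ord0)
  = g ord0 ord0 * (b *m Bm) 0 t.
  rewrite !mxE mulr_sumr; apply: eq_bigr => i _; rewrite hy !mxE; ring.
by move/(mulfI l0n).
Qed.

Lemma lam_nz (hg : g \in unitmx) (hx : forall s, g ord0 (l0 s) = 0) (hy : forall s, g (l0 s) ord0 = 0) :
  g ord0 ord0 != 0.
Proof.
apply/eqP => l0; have := mulVmx hg; move/matrixP/(_ ord0 ord0).
rewrite !mxE big_ord_recl big1 ?l0 ?mulr0 ?add0r ?eqxx; last by move=> i _; rewrite hy mulr0.
by move/eqP; rewrite eq_sym oner_eq0.
Qed.

Lemma B_unit (hg : g \in unitmx) (hy : forall s, g (l0 s) ord0 = 0) : Bm \in unitmx.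
Proof.
rewrite unitmxE unitfE; apply/negP => /det0P [z nz hz].
pose v : 'rV[F]_n.+1 := \row_k oapp (fun i => z 0 i) 0 (unlift ord0 k).
have vg : v *m g = 0.
  apply/rowP => k; rewrite !mxE big_ord_recl mxE unlift_none /= mul0r add0r.
  under eq_bigr do rewrite mxE liftK /=.
  case: (unliftP ord0 k) => [j ->|->].
    have := congr1 (fun r : 'rV[F]_n => r 0 j) hz; rewrite !mxE => E.
    by rewrite -[RHS]E; apply: eq_bigr => i _; rewrite mxE.
  by rewrite big1 // => i _; rewrite hy mulr0.
have v0 : v = 0 by rewrite -[v](mulmxK hg) vg mul0mx.
move/eqP: nz; apply; apply/rowP => i.
by have := congr1 (fun r : 'rV[F]_n.+1 => r 0 (l0 i)) v0; rewrite !mxE liftK.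
Qed.
End Main.

Lemma char_cast (R : comNzRingType) (m : {poly R}) d (e : (size m).-1 = d) :
  m \is monic -> char_poly (castmx (e, e) (companionmx m)) = m.
Proof. by case: d / e => hm; rewrite castmx_id companionmxK. Qed.

Unset Implicit Arguments.
Set Strict Implicit.

Theorem mainTheorem1
  (p : nat) (hp : prime p) (n : nat) (hn : (2 < n)%N)
  (L : fieldExtType 'F_p) (hL : \dim {:L} = n)
  (alpha : L) (halpha : forall x : L, x != 0 -> exists k : nat, x = alpha ^+ k)
  (m : {poly 'F_p}) (hm : map_poly (in_alg L) m = minPoly 1%AS alpha)
  (hsz : (size m).-1 = n)
  (b : 'rV['F_p]_n) (hb : b != 0)
  (c : {ffun spair n -> 'F_p}) (hc : c != 0) :
  let A : 'M['F_p]_n := castmx (hsz, hsz) (companionmx m) in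
  forall g : 'M['F_p]_n.+1, g \in unitmx ->
    (forall v : 'rV['F_p]_n.+1, fmap b c A (v *m g) = hatmap g (fmap b c A v)) ->
    g = 1%:M.
Proof.
case: n hn hL hsz b hb c hc => [//|n'] hn hL hsz b hb c hc A g gu H.
have hmon : m \is monic by rewrite -(map_monic (in_alg L)) hm monic_minPoly.
have hA : horner_mx A m = 0 by have := Cayley_Hamilton A; rewrite /A char_cast.
have sm : size m = n'.+2 by move: (hsz); case: (size m) => [|k] /= E; [congruence | rewrite E].
have ha0 : alpha != 0.
  apply/eqP => a0.
  have e : ev alpha 'X = 0 by rewrite /ev map_polyX hornerX.
  have := dvdp_leq (negbT (polyX_eq0 _)) (ev_dvd hm e).
  by rewrite sm size_polyX ltnS leqNgt (leq_trans _ hn).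
have hAu : A \in unitmx.
  have := ev_unit halpha hm hA (q := 'X); rewrite horner_mx_X; apply.
  by rewrite /ev map_polyX hornerX.
have hx : forall s, g ord0 (lift ord0 s) = 0.
  move=> s; have := xU0 (x := row ord0 g) (c := c) hn _ s; rewrite mxE; apply.
  move=> t; have [mu hmu] := C1 H gu hAu (bvec (lift ord0 t)); exists mu => a b' h.
  by rewrite !mxE -hmu !bvecll.
have hy := C3 H hx hc.
have l0n := lam_nz gu hx hy.
have Bu := B_unit gu hy.
have hBA := C4 H hx hy.
have hbB := C5 H hx hy l0n.
have lam1 : g ord0 ord0 = 1.
  apply: (lam_one hp halpha hm ha0 l0n _); last by rewrite sm hL.
  exact: (lam_root halpha hm hA Bu hBA).
rewrite lam1 scale1r in hBA.
have B1 := B_one halpha hm hA sm hBA hbB hb.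
apply/matrixP => i j; rewrite !mxE.
case: (unliftP ord0 i) => [i' ->|->]; case: (unliftP ord0 j) => [j' ->|->].
- have := congr1 (fun M : 'M['F_p]_n'.+1 => M i' j') B1; rewrite !mxE => ->.
  by rewrite (inj_eq (@lift_inj _ ord0)).
- by rewrite hy eq_sym (negbTE (neq_lift _ _)).
- by rewrite hx (negbTE (neq_lift _ _)).
- by rewrite lam1 eqxx.
Qed.
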